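(* Let $\mathcal G$ be a good and equicontinuous pseudogroup on a compact metric space $X$, with good generating set $\mathcal G_1$ and compacted generating set $\mathcal G_2$. Then there is no Borel probability measure on $X$ that is $(\mathcal G,\mathcal G_2)$-expansive.
   Context: $\mathrm{Homeo}(X)$: homeomorphisms $g:D_g\to R_g$ between open subsets of $X$, composed on natural domains $D_{h\circ g}=g^{-1}(D_h)$. A pseudogroup is a subset of $\mathrm{Homeo}(X)$ containing $\mathrm{id}_X$, closed under composition, inversion, restriction to open subsets, and gluing along open covers of the domain. $\Gamma$ generates $\mathcal G$ if $\bigcup_{g\in\Gamma}(D_g\cup R_g)=X$ and $\mathcal G$ is exactly the set of $g\in\mathrm{Homeo}(X)$ locally equal near each point of $D_g$ to a finite composition of elements of $\Gamma$ and their inverses. A finite symmetric (containing $\mathrm{id}_X$, closed under inverses) generating set $\mathcal G_1$ is good if for each $g\in\mathcal G_1$ there is a compact $K_g\subset D_g$ such that $\mathcal G_2=\{g|_{\mathrm{int}(K_g)}:g\in\mathcal G_1\}$ still generates $\mathcal G$ ($\mathcal G_2$ is the compacted generating set; $\mathcal G$ is good if it has a good generating set). $\mathcal G$ is equicontinuous if it has a generating set $\Gamma$ closed under composition and inversion and satisfying: for every $\varepsilon>0$ there is $\delta>0$ such that for all $x,y\in X$ and $g\in\Gamma$ with $x,y\in D_g$, $d(x,y)<\delta\Rightarrow d(g(x),g(y))<\varepsilon$. Let $\mathcal G^2_n=\{h_1\circ\cdots\circ h_n:h_j\in\mathcal G_2\}$, $\mathcal G^{2,x}_n=\{g\in\mathcal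 G^2_n:x\in D_g\}$, $\Phi^2_\delta(x)=\{y:d(g(x),g(y))\le\delta\ \forall n\in\mathbb N,\ \forall g\in\mathcal G^{2,x}_n\cap\mathcal G^{2,y}_n\}$. A Borel probability measure $\mu$ is $(\mathcal G,\mathcal G_2)$-expansive if there is $\delta>0$ with $\mu(\Phi^2_\delta(x))=0$ for every $x\in X$. *)

(* Defs.v *)
From HB Require Import structures.
From mathcomp Require Import all_boot all_order all_algebra.
From mathcomp Require Import all_classical all_reals all_analysis.
Set Implicit Arguments. Unset Strict Implicit. Unset Printing Implicit Defensive.
Import Order.TTheory GRing.Theory Num.Theory.
Local Open Scope classical_set_scope.
Local Open Scope ring_scope.

Section Pseudogroups.
Variables (R : realType) (X : metricType R).

(* A partial map of X, encoded as X -> option X; its domain is where it is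
   defined.  This encoding makes composition on natural domains automatic. *)
Definition parmap := X -> option X.

Definition dom (g : parmap) : set X := [set x | exists y, g x = Some y].
Definition ran (g : parmap) : set X := [set y | exists x, g x = Some y].

(* totalisation (only used on the domain) *)
Definition tot (g : parmap) (x : X) : X := odflt x (g x).

Definition pid : parmap := fun x => Some x.

Definition pcomp (h g : parmap) : parmap := fun x => obind h (g x).

Definition prestrict (g : parmap) (U : set X) : parmap :=
  fun x => if pselect (U x) is left _ then g x else None.

Definition pinv (g : parmap) : parmap := fun y =>
  match pselect (exists x, g x = Some y) with
  | left h => Some (projT1 (cid h))
  | right _ => None
  end.

Definition Homeo (g : parmap) : Prop :=
  [/\ open (dom g), open (ran g),
      (forall x1 x2 y, g x1 = Some y -> g x2 = Some y -> x1 = x2),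
      (forall x, dom g x -> {for x, continuous (tot g)}) &
      (forall y, ran g y -> {for y, continuous (tot (pinv g))})].

Definition pseudogroup (G : set parmap) : Prop :=
  [/\ (forall g, G g -> Homeo g),
      G pid,
      (forall g h, G g -> G h -> G (pcomp h g)),
      (forall g, G g -> G (pinv g)) &
      (forall g U, G g -> open U -> G (prestrict g U))] /\
      (forall g (I : Type) (U : I -> set X), Homeo g ->
         (forall i, open (U i)) -> dom g = \bigcup_i U i ->
         (forall i, G (prestrict g (U i))) -> G g).

Fixpoint compn (S : set parmap) (n : nat) : set parmap :=
  match n with
  | 0 => [set pid]
  | n'.+1 => [set pcomp h g | h in S & g in compn S n']
  end.

Definition words (Gamma : set parmap) : set parmap :=
  \bigcup_(n in [set: nat]) compn (Gamma `|` [set pinv h | h in Gamma]) n.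

Definition generates (Gamma G : set parmap) : Prop :=
  [/\ (forall g, Gamma g -> Homeo g),
      \bigcup_(g in Gamma) (dom g `|` ran g) = [set: X] &
      (forall g, G g <-> (Homeo g /\
          forall x, dom g x -> exists2 w, words Gamma w &
                                 \forall y \near x, g y = w y))].

Definition symmetric_gen (G1 : set parmap) : Prop :=
  G1 pid /\ forall g, G1 g -> G1 (pinv g).

Definition compacted (G1 : set parmap) (K : parmap -> set X) : set parmap :=
  [set prestrict g (interior (K g)) | g in G1].

Definition good_gen (G G1 : set parmap) (K : parmap -> set X) : Prop :=
  [/\ finite_set G1, symmetric_gen G1, generates G1 G,
      (forall g, G1 g -> compact (K g) /\ K g `<=` dom g) &
      generates (compacted G1 K) G].

Definition equicontinuous_pg (G : set parmap) : Prop :=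
  exists Gamma : set parmap,
    [/\ generates Gamma G,
        (forall g h, Gamma g -> Gamma h -> Gamma (pcomp h g)),
        (forall g, Gamma g -> Gamma (pinv g)) &
        forall eps : R, 0 < eps -> exists2 delta : R, 0 < delta &
          forall x y g, Gamma g -> dom g x -> dom g y ->
            mdist x y < delta -> mdist (tot g x) (tot g y) < eps].

Definition Phi (G2 : set parmap) (delta : R) (x : X) : set X :=
  [set y | forall n g, (0 < n)%N -> compn G2 n g -> dom g x -> dom g y ->
             mdist (tot g x) (tot g y) <= delta].

End Pseudogroups.

(* metric spaces with a distinguished point (measurableType in
   MathComp-Analysis requires a pointed carrier) *)
#[short(type="pmetricType")]
HB.structure Definition PointedMetric (K : numDomainType) :=
  {M of Metric K M & isPointed M}.

Definition borel (R : realType) (X : pmetricType R)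
  : measurableType (@open X).-sigma := g_sigma_algebraType (@open X).

Definition expansive (R : realType) (X : pmetricType R)
    (mu : probability (borel X) R) (G2 : set (parmap X)) : Prop :=
  exists2 delta : R, 0 < delta &
    forall x : X, mu.-negligible (Phi G2 delta x).

(* Main.v *)
Require Import Defs.
From HB Require Import structures.
From mathcomp Require Import all_boot all_order all_algebra.
From mathcomp Require Import all_classical all_reals all_analysis.
Import Order.TTheory GRing.Theory Num.Theory.
Local Open Scope classical_set_scope.
Local Open Scope ring_scope.

Section S.
Variables (R : realType) (X : pmetricType R).

Lemma final_contra (mu : probability (borel X) R) (d0 : R) (G2 : set (parmap X)) (delta : R) :
  compact [set: X] -> 0 < d0 ->
  (forall x y : X, mdist x y < d0 -> Phi G2 delta x y) ->
  (forall x : X, mu.-negligible (Phi G2 delta x)) -> False.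
Proof.
move=> cX d0pos Hball Hneg.
have d2 : 0 < d0 / 2 by rewrite divr_gt0.
have := proj1 (compact_near_coveringP _) cX X (almost_everywhere mu)
  (fun i x => ~ (mdist x i < d0 / 2)) (ae_filter_ringOfSetsType mu).
case.
  move=> x _.
  exists (ball x (d0/2), ~` Phi G2 delta x).
    split; first by apply: nbhsx_ballx.
    rewrite /almost_everywhere /=.
    by apply: negligibleS (Hneg x) => z /= /contrapT.
  move=> [x' i] [/= bx' Pi] lt; apply: Pi; apply: Hball.
  move: bx'; rewrite ballEmdist /= => bx'.
  apply: (le_lt_trans (metric_triangle _ x' _)).
  by rewrite [d0]splitr ltrD.
move=> A [mA muA sub].
have : A = setT by apply/seteqP; split => // z _; apply: sub => /(_ z I); rewrite mdistxx; apply.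
move=> AT; move: muA; rewrite AT probability_setT => /eqP; rewrite onee_eq0.
done.
Qed.

Lemma pcomp_pid_l (g : parmap X) : Defs.pcomp (@pid R X) g = g.
Proof. by apply/funext => x; rewrite /Defs.pcomp; case: (g x). Qed.

Lemma pcomp_pid_r (g : parmap X) : Defs.pcomp g (@pid R X) = g.
Proof. by apply/funext => x. Qed.

Lemma gp_comp (Gamma : set (parmap X)) a b :
  (forall g h, Gamma g -> Gamma h -> Gamma (Defs.pcomp h g)) ->
  (Gamma a \/ a = (@pid R X)) -> (Gamma b \/ b = (@pid R X)) ->
  Gamma (Defs.pcomp a b) \/ Defs.pcomp a b = (@pid R X).
Proof.
move=> Hc [Ga|->] [Gb|->]; rewrite ?pcomp_pid_l ?pcomp_pid_r; by [left; apply: Hc|left|left|right].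
Qed.

Lemma words_sub (Gamma : set (parmap X)) :
  (forall g h, Gamma g -> Gamma h -> Gamma (Defs.pcomp h g)) ->
  (forall g, Gamma g -> Gamma (Defs.pinv g)) ->
  forall w, words Gamma w -> Gamma w \/ w = (@pid R X).
Proof.
move=> Hc Hi w [n _]; elim: n w => [|n IH] w /=.
  by move=> ->; right.
case=> h Sh [g' /IH Hg' <-].
have Gh : Gamma h by case: Sh => [//|[h0 Gh0 <-]]; apply: Hi.
exact: gp_comp Hc (or_introl Gh) Hg'.
Qed.

Lemma leb (G Gamma : set (parmap X)) (g1 : parmap X) (Kg : set X) :
  generates Gamma G ->
  (forall g h, Gamma g -> Gamma h -> Gamma (Defs.pcomp h g)) ->
  (forall g, Gamma g -> Gamma (Defs.pinv g)) ->
  G g1 -> compact Kg -> Kg `<=` dom g1 ->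
  \forall r \near (0:R)^'+, forall a, Kg a -> forall b, mdist a b < r -> dom g1 b ->
     exists2 w, (Gamma w \/ w = (@pid R X)) & (g1 a = w a /\ g1 b = w b).
Proof.
move=> [_ _ HG] Hc Hi Gg1 cK KD.
have := proj1 (compact_near_coveringP _) cK R ((0:R)^'+)
  (fun r a => forall b, mdist a b < r -> dom g1 b ->
     exists2 w, (Gamma w \/ w = (@pid R X)) & (g1 a = w a /\ g1 b = w b)) (at_right_proper_filter 0).
move=> H; apply: filterS (H _); first by move=> r Hr a Ka; exact: Hr.
  move=> x Kx.
  have [_ /(_ x (KD _ Kx)) [w Ww Hnear]] := proj1 (HG g1) Gg1.
  move: Hnear => /nbhs_ballP [e e0 He].
  have e2 : 0 < e / 2 by rewrite divr_gt0.
  exists (ball x (e/2), [set r | r < e / 2]).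
    split; first exact: nbhsx_ballx.
    exact: nbhs_right_lt.
  move=> [x' r] [/= bx' re] b xb _.
  exists w; first exact: words_sub Ww.
  move: bx'; rewrite ballEmdist /= => bx'.
  split; apply: He; rewrite ballEmdist /=.
    by apply: lt_trans bx' _; rewrite ltr_pdivrMr // ltr_pMr // ltr1n.
  apply: (le_lt_trans (metric_triangle _ x' _)).
  by rewrite [e]splitr ltrD // (lt_trans xb re).
Qed.
End S.

Theorem mainTheorem19 (R : realType) (X : pmetricType R)
    (G G1 : set (parmap X)) (K : parmap X -> set X) :
  compact [set: X] ->
  pseudogroup G ->
  good_gen G G1 K ->
  equicontinuous_pg G ->
  ~ exists mu : probability (borel X) R, expansive mu (compacted G1 K).
Proof.
move=> cX pG [finG1 symG1 genG1 KG1 genG2] [Gamma [genGam HcG HiG Heq]].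
move=> [mu [delta dpos Hneg]].
have G1G : forall g, G1 g -> G g.
  move=> g G1g; case: genG1 => Hh _ HG; apply/HG; split; first exact: Hh.
  move=> x _; exists g; last exact: filterE.
  exists 1%N => //; exists g; first by left.
  by exists (@pid R X) => //; rewrite pcomp_pid_r.
have Lall : \forall r \near (0:R)^'+, forall g1, G1 g1 ->
   forall a, K g1 a -> forall b, mdist a b < r -> dom g1 b ->
     exists2 w, (Gamma w \/ w = (@pid R X)) & (g1 a = w a /\ g1 b = w b).
  have [D HD] := proj1 finite_fsetP finG1.
  have := @filter_bigI _ _ D (fun g1 => [set r | forall a, K g1 a -> forall b, mdist a b < r -> dom g1 b ->
     exists2 w, (Gamma w \/ w = (@pid R X)) & (g1 a = w a /\ g1 b = w b)]) ((0:R)^'+) (at_right_proper_filter 0) _.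
  move=> H; apply: filterS (H _).
    move=> r Hr g1 G1g1; apply: (Hr g1); rewrite HD in G1g1; exact: G1g1.
  move=> g1 Dg1.
  have G1g1 : G1 g1 by rewrite HD.
  have [cK KD] := KG1 _ G1g1.
  exact: (@leb R X G Gamma g1 (K g1) genGam HcG HiG (G1G _ G1g1) cK KD).
have [r [r0 [rd Lr]]] : exists r : R, 0 < r /\ r <= delta /\ forall g1, G1 g1 ->
   forall a, K g1 a -> forall b, mdist a b < r -> dom g1 b ->
     exists2 w, (Gamma w \/ w = (@pid R X)) & (g1 a = w a /\ g1 b = w b).
  have [r [[/= r0 rd] Lr]] := @filter_ex _ _ (at_right_proper_filter (0:R)) _
    (@filterI _ _ (at_right_proper_filter (0:R)) _ _
      (@filterI _ _ (at_right_proper_filter (0:R)) _ _ (nbhs_right_gt (0:R)) (nbhs_right_lt dpos)) Lall).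
  by exists r; split; [|split; [apply: ltW|]].
have [d0 d0pos Hd0] := Heq r r0.
pose d1 := Num.min d0 r.
have d1pos : 0 < d1 by rewrite lt_min d0pos r0.
have claim : forall n h, compn (compacted G1 K) n h -> forall x y, mdist x y < d1 ->
   dom h x -> dom h y ->
   exists2 W, (Gamma W \/ W = (@pid R X)) & (h x = W x /\ h y = W y).
  elim => [|n IH] h /=.
    by move=> -> x y _ _ _; exists (@pid R X); [right|].
  case=> g G2g [h' Hh' <-] x y dxy [z hz] [z' hz'].
  move: hz hz'; rewrite /Defs.pcomp.
  case E1: (h' x) => [x1|] //= gx1.
  case E2: (h' y) => [y1|] //= gy1.
  have [W HW [Wx Wy]] := IH h' Hh' x y dxy (ex_intro _ x1 E1) (ex_intro _ y1 E2).
  case: G2g => g1 G1g1 Eg; subst g.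
  move: gx1 gy1; rewrite /prestrict.
  case: pselect => // intx1 gx1; case: pselect => // inty1 gy1.
  have d11 : mdist x1 y1 < r.
    case: HW => [GW|WP].
      have := Hd0 x y W GW _ _ _.
      rewrite /tot -Wx -Wy E1 E2 /=; apply.
      - by exists x1; rewrite -Wx.
      - by exists y1; rewrite -Wy.
      - by apply: lt_le_trans dxy _; rewrite ge_min lexx.
    move: Wx Wy; rewrite WP E1 E2 => -[->] [->].
    by apply: lt_le_trans dxy _; rewrite ge_min lexx orbT.
  have [w Hw [wx wy]] := Lr g1 G1g1 x1 (interior_subset intx1) y1 d11 (ex_intro _ z' gy1).
  exists (Defs.pcomp w W); first exact: gp_comp.
  rewrite /Defs.pcomp -Wx -Wy E1 E2 /= /prestrict.
  by split.
have := (@final_contra R X mu d1 (compacted G1 K) delta cX d1pos); apply; last exact: Hneg.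
move=> x y dxy n g _ Hg Dx Dy.
have [W HW [Wx Wy]] := claim n g Hg x y dxy Dx Dy.
rewrite /tot Wx Wy.
case: HW => [GW|->] /=.
  apply/ltW/(lt_le_trans _ rd).
  have := Hd0 x y W GW _ _ _; rewrite /tot; apply.
  - by case: Dx => z; rewrite Wx; exists z.
  - by case: Dy => z; rewrite Wy; exists z.
  - by apply: lt_le_trans dxy _; rewrite ge_min lexx.
apply/ltW/(lt_le_trans dxy)/(le_trans _ rd).
by rewrite ge_min lexx orbT.
Qed.
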